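(* Let $M,K\in\mathbb{R}^{m\times m}$ be symmetric positive definite, $\nu>0$, $\omega>0$, $\theta=1+\nu\omega^2$. Let $\lambda_{\min},\lambda_{\max}$ (resp. $\mu_{\min},\mu_{\max}$) be the smallest and largest eigenvalues of $M$ (resp. $K$). Define for $\alpha>0$ \[ \chi(\alpha)=\max_{\lambda\in\sigma(M)}\frac{\sqrt{\alpha^2+\theta^2\lambda^2}}{\alpha+\theta\lambda},\qquad \vartheta(\alpha)=\max_{\mu\in\sigma(K)}\frac{\sqrt{\alpha^2+\nu\theta\mu^2}}{\alpha+\sqrt{\nu\theta}\,\mu}. \] Then $\alpha_1=\theta\sqrt{\lambda_{\min}\lambda_{\max}}$ minimizes $\chi$ over $\alpha>0$ and $\alpha_2=\sqrt{\nu\theta\,\mu_{\min}\mu_{\max}}$ minimizes $\vartheta$ over $\alpha>0$. Moreover, with $P_\alpha$ the MBAS iteration matrix defined in the context, $\rho(P_\alpha)\le\chi(\alpha)$ and $\rho(P_\alpha)\le\vartheta(\alpha)$ for all $\alpha>0$.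
   Context: $\sigma(\cdot)$ is the spectrum and $\rho(\cdot)$ the spectral radius. With $I$ the $m\times m$ identity, $H_1=\begin{pmatrix} M&0\\0&M\end{pmatrix}$, $H_2=\begin{pmatrix} K&0\\0&K\end{pmatrix}$, $R=\frac{1}{\sqrt{\nu\theta}}\begin{pmatrix} -i\omega\nu I & \sqrt{\nu} I\\ -\sqrt{\nu} I & i\omega\nu I\end{pmatrix}$, the MBAS iteration matrix is $P_\alpha=(\alpha I_{2m}+\sqrt{\nu\theta}H_2)^{-1}(\alpha I_{2m}+\theta RH_1)(\alpha I_{2m}+\theta H_1)^{-1}(\alpha I_{2m}-\sqrt{\nu\theta}RH_2)$. *)

(* Defs.v *)
From HB Require Import structures.
From mathcomp Require Import all_boot all_order all_algebra.
From mathcomp Require Import classical_sets reals complex.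
Set Implicit Arguments. Unset Strict Implicit. Unset Printing Implicit Defensive.
Import Order.TTheory GRing.Theory Num.Theory.
Local Open Scope ring_scope.
Local Open Scope classical_set_scope.

Definition spectrum (F : fieldType) (n : nat) (A : 'M[F]_n) : set F :=
  [set a | eigenvalue A a].

Definition sym_posdef (R : realType) (m : nat) (A : 'M[R]_m) : Prop :=
  A^T = A /\ (forall v : 'rV[R]_m, v != 0 -> 0 < (v *m A *m v^T) 0 0).

(* spectral radius rho(A) = max_{z in sigma(A)} |z| for a complex matrix
   (a finite set, so its supremum is its maximum) *)
Definition spectral_radius (R : realType) (n : nat) (A : 'M[R[i]]_n) : R :=
  sup [set ComplexField.Normc.normc z | z in spectrum A].

Definition theta (R : realType) (nu omega : R) : R := 1 + nu * omega ^+ 2.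

Definition chi (R : realType) (m : nat) (M : 'M[R]_m) (th alpha : R) : R :=
  sup [set Num.sqrt (alpha ^+ 2 + th ^+ 2 * l ^+ 2) / (alpha + th * l)
      | l in spectrum M].

Definition vartheta (R : realType) (m : nat) (K : 'M[R]_m) (nu th alpha : R) : R :=
  sup [set Num.sqrt (alpha ^+ 2 + nu * th * mu ^+ 2) / (alpha + Num.sqrt (nu * th) * mu)
      | mu in spectrum K].

Local Open Scope complex_scope.

Definition cmx (R : realType) (m : nat) (A : 'M[R]_m) : 'M[R[i]]_m :=
  map_mx (fun x : R => x%:C) A.

Definition H1 (R : realType) (m : nat) (M : 'M[R]_m) : 'M[R[i]]_(m + m) :=
  block_mx (cmx M) 0 0 (cmx M).
Definition H2 (R : realType) (m : nat) (K : 'M[R]_m) : 'M[R[i]]_(m + m) :=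
  block_mx (cmx K) 0 0 (cmx K).

Definition Rmx (R : realType) (m : nat) (nu omega : R) : 'M[R[i]]_(m + m) :=
  ((Num.sqrt (nu * theta nu omega))^-1)%:C *:
    block_mx ((- ('i * (omega * nu)%:C))%:M) ((Num.sqrt nu)%:C%:M)
             ((- (Num.sqrt nu)%:C)%:M) (('i * (omega * nu)%:C)%:M).

Definition P_MBAS (R : realType) (m : nat) (M K : 'M[R]_m) (nu omega alpha : R)
  : 'M[R[i]]_(m + m) :=
  let th := theta nu omega in
  let s := Num.sqrt (nu * th) in
  let I2 : 'M[R[i]]_(m + m) := alpha%:C%:M in
  invmx (I2 + s%:C *: H2 K) *m (I2 + th%:C *: (Rmx m nu omega *m H1 M))
    *m invmx (I2 + th%:C *: H1 M) *m (I2 - s%:C *: (Rmx m nu omega *m H2 K)).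

(* Main.v *)
Require Import Defs.
From HB Require Import structures.
From mathcomp Require Import all_boot all_order all_algebra.
From mathcomp Require Import classical_sets reals complex.
From mathcomp Require Import ring lra.
Import Order.TTheory GRing.Theory Num.Theory.
Local Open Scope ring_scope.
Local Open Scope classical_set_scope.
Set Implicit Arguments. Unset Strict Implicit.

Section PA.
Variable R : realType.
Definition Ff (a b : R) := Num.sqrt (a ^+ 2 + b ^+ 2) / (a + b).

Lemma Ff_ge0 a b : 0 < a -> 0 < b -> 0 <= Ff a b.
Proof. by move=> a0 b0; rewrite /Ff divr_ge0 ?sqrtr_ge0 // ltW // addr_gt0. Qed.

Lemma Ff_sqr a b : 0 < a -> 0 < b -> Ff a b ^+ 2 = (a^+2 + b^+2) / (a+b)^+2.
Proof.
move=> a0 b0; rewrite /Ff exprMn sqr_sqrtr ?exprVn //.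
by rewrite addr_ge0 // sqr_ge0.
Qed.

Lemma Ff_le1 a b : 0 < a -> 0 < b -> Ff a b <= 1.
Proof.
move=> a0 b0; rewrite -(ler_sqr (Ff_ge0 a0 b0)) ?nnegrE // expr1n Ff_sqr //.
rewrite ler_pdivrMr ?exprn_gt0 ?addr_gt0 // mul1r; nra.
Qed.

Lemma FfC a b : Ff a b = Ff b a.
Proof. by rewrite /Ff addrC [b + a]addrC. Qed.

Lemma Ffle c x x' : 0 < c -> 0 < x -> 0 < x' ->
  0 <= (x - x') * (c ^+ 2 - x * x') -> Ff c x <= Ff c x'.
Proof.
move=> c0 x0 x'0 h.
rewrite -(ler_sqr (Ff_ge0 c0 x0)) ?nnegrE ?Ff_ge0 // !Ff_sqr //.
rewrite -subr_ge0.
have cx : c + x != 0 by rewrite gt_eqF // addr_gt0.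
have cx' : c + x' != 0 by rewrite gt_eqF // addr_gt0.
have -> : (c ^+ 2 + x' ^+ 2) / (c + x') ^+ 2 - (c ^+ 2 + x ^+ 2) / (c + x) ^+ 2
   = 2 * c * ((x - x') * (c ^+ 2 - x * x')) / ((c + x) ^+ 2 * (c + x') ^+ 2).
  by field; rewrite cx cx'.
apply: divr_ge0; last by rewrite mulr_ge0 ?sqr_ge0.
by rewrite mulr_ge0 // mulr_ge0 // ltW.
Qed.

Lemma Ff_qc a b1 b2 b : 0 < a -> 0 < b1 -> b1 <= b <= b2 ->
  Ff a b <= Num.max (Ff a b1) (Ff a b2).
Proof.
move=> a0 b10 /andP[h1 h2]; have b0 : 0 < b by exact: lt_le_trans b10 h1.
have b20 : 0 < b2 by exact: lt_le_trans b0 h2.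
have [ba|ab] := lerP b a.
  rewrite le_max; apply/orP; left; apply: Ffle => //.
  apply: mulr_ge0; first by rewrite subr_ge0.
  by rewrite subr_ge0 expr2; apply: ler_pM (ltW b0) (ltW b10) ba (le_trans h1 ba).
rewrite le_max; apply/orP; right; apply: Ffle => //.
apply: mulr_le0; first by rewrite subr_le0.
by rewrite subr_le0 expr2; apply: ler_pM (ltW a0) (ltW a0) (ltW ab) (le_trans (ltW ab) h2).
Qed.

Lemma sup_imgF (S : set R) (k x1 x2 a : R) : 0 < k -> 0 < x1 -> S x1 -> S x2 ->
  (forall x, S x -> x1 <= x <= x2) -> 0 < a ->
  sup [set Ff a (k * x) | x in S] = Num.max (Ff a (k * x1)) (Ff a (k * x2)).
Proof.
move=> k0 x10 S1 S2 hS a0.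
have ub : ubound [set Ff a (k * x) | x in S] (Num.max (Ff a (k * x1)) (Ff a (k * x2))).
  move=> _ [x Sx <-]; apply: Ff_qc => //; first exact: mulr_gt0.
  by have /andP[h1 h2] := hS x Sx; rewrite !ler_pM2l // h1 h2.
apply/le_anti/andP; split.
  by apply: ge_sup => //; exists (Ff a (k * x1)); exists x1.
have hub : has_ubound [set Ff a (k * x) | x in S] by exists (Num.max (Ff a (k * x1)) (Ff a (k * x2))).
rewrite ge_max; apply/andP; split; apply: ub_le_sup => //.
  by exists x1.
by exists x2.
Qed.

Lemma optF (b1 b2 a : R) : 0 < b1 -> b1 <= b2 -> 0 < a ->
  Num.max (Ff (Num.sqrt (b1 * b2)) b1) (Ff (Num.sqrt (b1 * b2)) b2) <= Num.max (Ff a b1) (Ff a b2).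
Proof.
move=> b10 b12 a0p; set a0 := Num.sqrt (b1 * b2).
have b20 : 0 < b2 by exact: lt_le_trans b10 b12.
have a00 : 0 < a0 by rewrite sqrtr_gt0 mulr_gt0.
have a0s : a0 ^+ 2 = b1 * b2 by rewrite sqr_sqrtr // ltW // mulr_gt0.
have e : Ff a0 b1 = Ff a0 b2.
  apply/le_anti/andP; split; apply: Ffle => //; by rewrite a0s ?[b2 * b1]mulrC subrr mulr0.
rewrite e maxxx.
have [aa|aa] := lerP a a0.
  rewrite le_max; apply/orP; right; rewrite FfC [Ff a b2]FfC.
  apply: Ffle => //; apply: mulr_ge0; first by rewrite subr_ge0.
  rewrite subr_ge0; apply: (@le_trans _ _ (a0 ^+ 2)).
    by rewrite expr2 ler_pM2l.
  by rewrite a0s expr2 ler_pM2r.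
rewrite le_max; apply/orP; left; rewrite -e FfC [Ff a b1]FfC.
apply: Ffle => //; apply: mulr_le0; first by rewrite subr_le0 ltW.
rewrite subr_le0; apply: (@le_trans _ _ (a0 ^+ 2)).
  by rewrite a0s expr2 ler_pM2l.
by rewrite expr2 ler_pM2l // ltW.
Qed.
End PA.
Section PA2.
Variable R : realType.
Lemma Ff_quad (a b c : R) : 0 < a -> 0 < b -> Ff a b ^+ 2 <= c ->
  0 <= (c - 1) * a ^+ 2 + 2 * c * a * b + (c - 1) * b ^+ 2.
Proof.
move=> a0 b0; rewrite Ff_sqr // ler_pdivrMr ?exprn_gt0 ?addr_gt0 // => h.
have -> : (c - 1) * a ^+ 2 + 2 * c * a * b + (c - 1) * b ^+ 2 = c * (a + b) ^+ 2 - (a ^+ 2 + b ^+ 2) by ring.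
by rewrite subr_ge0.
Qed.
End PA2.

Section G6.
Variable C : numClosedFieldType.
Local Open Scope sesquilinear_scope.
Definition nrmg n (x : 'rV[C]_n) := (x *m x^t*) 0 0.

Lemma nrmg_gt0 n (u : 'rV[C]_n) : u != 0 -> 0 < nrmg u.
Proof. by rewrite /nrmg -dotmxE dnorm_gt0. Qed.

Lemma nrmgZ n (z : C) (u : 'rV[C]_n) : nrmg (z *: u) = z * z^* * nrmg u.
Proof.
have e : (z *: u)^T = z *: u^T by apply/matrixP => i j; rewrite !mxE.
by rewrite /nrmg e map_mxZ /= -scalemxAr -scalemxAl !mxE mulrA [z^* * z]mulrC.
Qed.

Lemma comm_inv n (X Y : 'M[C]_n) : Y \in unitmx -> X *m Y = Y *m X -> X *m invmx Y = invmx Y *m X.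
Proof.
move=> uY h.
by rewrite -{1}[X](mulKmx uY) -h -mulmxA mulmxK.
Qed.

Lemma eig_main n (A B Cm D : 'M[C]_n) (z c1 c2 : C) :
  A \in unitmx -> Cm \in unitmx -> B *m Cm = Cm *m B -> D *m A = A *m D ->
  0 <= c1 -> 0 <= c2 ->
  (forall x, nrmg (x *m B) <= c1 * nrmg (x *m Cm)) ->
  (forall x, nrmg (x *m D) <= c2 * nrmg (x *m A)) ->
  eigenvalue (invmx A *m B *m invmx Cm *m D) z -> z * z^* <= c1 * c2.
Proof.
move=> uA uC hBC hDA c10 c20 h1 h2 /eigenvalueP [v hv vn0].
set u := v *m invmx A.
have un0 : u != 0.
  apply: contra vn0 => /eqP u0; apply/eqP.
  by rewrite -(mulmxKV uA v) -/u u0 mul0mx.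
have eq1 : u *m B *m invmx Cm *m D *m invmx A = z *: u.
  by rewrite /u scalemxAl -hv !mulmxA.
set p := u *m B *m invmx Cm.
have hp : nrmg p <= c1 * nrmg u.
  have -> : p = (u *m invmx Cm) *m B by rewrite /p -mulmxA comm_inv // mulmxA.
  by have := h1 (u *m invmx Cm); rewrite mulmxKV.
have hz : nrmg (z *: u) <= c2 * nrmg p.
  have -> : z *: u = (p *m invmx A) *m D.
    by rewrite -eq1 -/p -!mulmxA comm_inv.
  by have := h2 (p *m invmx A); rewrite mulmxKV.
have hu := nrmg_gt0 un0.
rewrite nrmgZ in hz.
rewrite -(ler_pM2r hu); apply: (le_trans hz).
apply: le_trans (ler_wpM2l c20 hp) _; by rewrite mulrA [c2 * c1]mulrC.
Qed.

Lemma comm_BC n (G Q : 'M[C]_n) (a e f : C) : Q *m G = G *m Q ->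
  (a%:M + e *: (Q *m G)) *m (a%:M + f *: G) = (a%:M + f *: G) *m (a%:M + e *: (Q *m G)).
Proof.
move=> h.
rewrite !mulmxDl !mulmxDr !mul_scalar_mx !mul_mx_scalar -!scalemxAl -!scalemxAr !scalerA.
have -> : Q *m G *m G = G *m (Q *m G) by rewrite {1}h -mulmxA.
by rewrite [e * f]mulrC !addrA [_ + (a * f) *: G + _]addrAC.
Qed.
End G6.

Section Gen.
Variable C : numClosedFieldType.
Local Open Scope sesquilinear_scope.
Lemma psd_gen m (A : 'M[C]_m) (p0 p1 p2 : C) : A \is hermsymmx ->
  (forall z, z \is Num.real -> eigenvalue A z -> 0 <= p0 + p1 * z + p2 * z ^+ 2) ->
  forall x : 'rV[C]_m, 0 <= (x *m ((p0)%:M + p1 *: A + p2 *: (A *m A)) *m x^t*) 0 0.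
Proof.
move=> hA hp x.
have /orthomx_spectralP eA := hermitian_normalmx hA.
have Uu := spectral_unitarymx A.
have dr := hermitian_spectral_diag_real hA.
set U := spectralmx A in eA Uu; set d := spectral_diag A in eA dr.
have UU : U *m U^t* = 1%:M by apply/unitarymxP.
have UU' : U^t* *m U = 1%:M by apply: mulmx1C.
rewrite invmx_unitary // in eA.
set E : 'rV[C]_m := \row_j (p0 + p1 * d 0 j + p2 * d 0 j ^+ 2).
have eN : p0%:M + p1 *: A + p2 *: (A *m A) = U^t* *m diag_mx E *m U.
  have -> : diag_mx E = p0%:M + p1 *: diag_mx d + p2 *: (diag_mx d *m diag_mx d).
    rewrite mulmx_diag; apply/matrixP => i j; rewrite !mxE.
    by case: (i == j); rewrite ?mulr1n ?mulr0n ?expr2 // !mulr0 !addr0.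
  rewrite eA !mulmxA mulmxtVK // -[U^t* *m diag_mx d *m diag_mx d *m U]mulmxA.
  rewrite !mulmxDr !mulmxDl -!scalemxAr -!scalemxAl !mulmxA mul_mx_scalar.
  by rewrite -scalemxAl UU' scalemx1.
rewrite eN.
set w := x *m U^t*.
have -> : x *m (U^t* *m diag_mx E *m U) *m x^t* = w *m diag_mx E *m w^t*.
  by rewrite /w trmx_mul map_mxM trmxCK !mulmxA.
rewrite mul_mx_diag mxE; apply: sumr_ge0 => j _; rewrite !mxE.
have dj : d 0 j \is Num.real by move/mxOverP: dr; apply.
have key : row j U *m A = d 0 j *: row j U.
  rewrite -row_mul eA !mulmxA UU mul1mx.
  by rewrite row_mul row_diag_mx -scalemxAl -rowE.
have nz : row j U != 0.
  apply/eqP => h0.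
  have : row j (U *m U^t*) = 0 by rewrite row_mul h0 mul0mx.
  rewrite UU => /rowP /(_ j); rewrite !mxE eqxx /=.
  by move/eqP; rewrite oner_eq0.
have eig : eigenvalue A (d 0 j).
  by apply/eigenvalueP; exists (row j U).
have h := hp _ dj eig.
rewrite -mulrA mulrC -mulrA; apply: mulr_ge0 => //.
by rewrite mulrC; exact: mul_conjC_ge0.
Qed.
End Gen.
Section T.
Variable R : realType.
Local Notation C := (R[i]).
Local Open Scope sesquilinear_scope.
Lemma conjR (x : R) : (x%:C)%C^* = x%:C%C.
Proof. by rewrite conj_Creal //; apply/complex_realP; exists x. Qed.

Lemma adjM p q r (X : 'M[C]_(p,q)) (Y : 'M[C]_(q,r)) : (X *m Y)^t* = Y^t* *m X^t*.
Proof. by rewrite trmx_mul map_mxM. Qed.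
Lemma adjD p q (X Y : 'M[C]_(p,q)) : (X + Y)^t* = X^t* + Y^t*.
Proof. by rewrite linearD map_mxD. Qed.
Lemma adjN p q (X : 'M[C]_(p,q)) : (- X)^t* = - X^t*.
Proof. by rewrite linearN map_mxN. Qed.
Lemma adjZ p q (k : R) (X : 'M[C]_(p,q)) : (k%:C%C *: X)^t* = k%:C%C *: X^t*.
Proof. by rewrite linearZ map_mxZ /= conjR. Qed.
Lemma adjS n (k : R) : ((k%:C%C)%:M : 'M[C]_n)^t* = (k%:C%C)%:M.
Proof. by rewrite tr_scalar_mx map_scalar_mx /= conjR. Qed.

Lemma BB n (G Q : 'M[C]_n) (a e : R) : G^t* = G -> Q^t* = -Q -> Q *m Q = - 1%:M -> Q *m G = G *m Q ->
 let B := (a%:C%C)%:M + e%:C%C *: (Q *m G) in B *m B^t* = ((a^+2)%:C%C)%:M + (e^+2)%:C%C *: (G *m G).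
Proof.
move=> hG hQ hQQ hQG B.
rewrite /B adjD adjS adjZ adjM hG hQ.
rewrite mulmxDl !mulmxDr !mul_scalar_mx !mul_mx_scalar scale_scalar_mx.
rewrite -!scalemxAl -!scalemxAr !scalerA.
have -> : Q *m G *m (G *m - Q) = G *m G.
  rewrite !mulmxN -hQG -mulmxA [G *m (Q *m G)]mulmxA -hQG.
  by rewrite !mulmxA hQQ mulNmx mul1mx mulNmx opprK.
by rewrite mulmxN scalerN -hQG addrA subrK -!rmorphM /= -!expr2.
Qed.

Definition qf n (x : 'rV[C]_n) (X : 'M[C]_n) := (x *m X *m x^t*) 0 0.
Lemma qfD n (x : 'rV[C]_n) X Y : qf x (X + Y) = qf x X + qf x Y.
Proof. by rewrite /qf mulmxDr mulmxDl mxE. Qed.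
Lemma qfZ n (x : 'rV[C]_n) k X : qf x (k *: X) = k * qf x X.
Proof. by rewrite /qf -scalemxAr -scalemxAl mxE. Qed.
Lemma qfN n (x : 'rV[C]_n) X : qf x (- X) = - qf x X.
Proof. by rewrite /qf mulmxN mulNmx mxE. Qed.
Definition nrm n (x : 'rV[C]_n) := (x *m x^t*) 0 0.
Lemma qfS n (x : 'rV[C]_n) k : qf x k%:M = k * nrm x.
Proof. by rewrite /qf mul_mx_scalar -scalemxAl mxE. Qed.
Lemma nrmM n (x : 'rV[C]_n) (B : 'M[C]_n) : (x *m B *m (x *m B)^t*) 0 0 = qf x (B *m B^t*).
Proof. by rewrite adjM /qf !mulmxA. Qed.

Definition psdq n (G : 'M[C]_n) (p0 p1 p2 : R) := forall x : 'rV[C]_n,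
  0 <= qf x ((p0%:C%C)%:M + p1%:C%C *: G + p2%:C%C *: (G *m G)).

Lemma normB n (G Q : 'M[C]_n) (a e f c : R) : G^t* = G -> Q^t* = -Q -> Q *m Q = - 1%:M -> Q *m G = G *m Q ->
  e ^+ 2 = f ^+ 2 -> psdq G ((c - 1) * a ^+ 2) (2 * c * a * f) ((c - 1) * f ^+ 2) ->
  forall x : 'rV[C]_n,
  (x *m ((a%:C%C)%:M + e%:C%C *: (Q *m G)) *m (x *m ((a%:C%C)%:M + e%:C%C *: (Q *m G)))^t*) 0 0
   <= c%:C%C * (x *m ((a%:C%C)%:M + f%:C%C *: G) *m (x *m ((a%:C%C)%:M + f%:C%C *: G))^t*) 0 0.
Proof.
move=> hG hQ hQQ hQG hef hpsd x.
rewrite !nrmM BB // adjD adjS adjZ hG.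
rewrite mulmxDl !mulmxDr !mul_scalar_mx !mul_mx_scalar scale_scalar_mx.
rewrite -!scalemxAl -!scalemxAr !scalerA.
rewrite !(qfD, qfZ, qfS, qfN) -subr_ge0.
have := hpsd x; rewrite !(qfD, qfZ, qfS, qfN).
set n0 := nrm x; set n1 := qf x G; set n2 := qf x (G *m G).
rewrite hef !rmorphM !rmorphB /= rmorph1 rmorph_nat.
move=> h; apply: (le_trans h); rewrite le_eqVlt; apply/orP; left; apply/eqP.
ring.
Qed.

Lemma cmx_real m (M : 'M[R]_m) : cmx M = map_mx (real_complex R) M.
Proof. by []. Qed.

Lemma eig_cmx m (M : 'M[R]_m) (r : R) : eigenvalue (cmx M) (r%:C%C) -> spectrum M r.
Proof.
by rewrite /spectrum /= cmx_real !eigenvalue_root_char -map_char_poly fmorph_root.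
Qed.

Lemma herm_cmx m (M : 'M[R]_m) : M^T = M -> cmx M \is hermsymmx.
Proof.
move=> hM; apply/is_hermitianmxP; rewrite expr0 scale1r.
apply/matrixP => i j; rewrite !mxE conjR.
have h := congr1 (fun X : 'M[R]_m => X i j) hM; rewrite /= mxE in h.
by rewrite h.
Qed.


Lemma psd_cmx m (M : 'M[R]_m) (p0 p1 p2 : R) : M^T = M ->
  (forall r, spectrum M r -> 0 <= p0 + p1 * r + p2 * r ^+ 2) -> psdq (cmx M) p0 p1 p2.
Proof.
move=> hM hp x; rewrite /qf.
apply: (psd_gen (herm_cmx hM)) => z zr eig.
have edj : z = (complex.Re z)%:C%C by rewrite RRe_real.
have Sr : spectrum M (complex.Re z) by apply: eig_cmx; rewrite -edj.
have h := hp _ Sr; rewrite -ler0c !rmorphD !rmorphM ?rmorphXn /= -edj in h; exact: h.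
Qed.
End T.

Section T5.
Variable R : realType.
Local Notation C := (R[i]).
Local Open Scope sesquilinear_scope.

Lemma psd_block m (G : 'M[C]_m) p0 p1 p2 : psdq G p0 p1 p2 -> psdq (block_mx G 0 0 G) p0 p1 p2.
Proof.
move=> h x; rewrite -(hsubmxK x); set x1 := lsubmx x; set x2 := rsubmx x.
rewrite /qf mulmx_block !mulmx0 !mul0mx !addr0 !add0r.
rewrite (scalar_mx_block m m) !scale_block_mx !add_block_mx !scaler0 !addr0.
rewrite mul_row_block !mulmx0 !addr0 !add0r tr_row_mx map_col_mx mul_row_col mxE.
by apply: addr_ge0; [exact: h | exact: h].
Qed.

Lemma adj_cmx m (M : 'M[R]_m) : M^T = M -> (cmx M)^t* = cmx M.
Proof.
move=> hM; apply/matrixP => i j; rewrite !mxE conjR.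
have h := congr1 (fun X : 'M[R]_m => X i j) hM; rewrite /= mxE in h.
by rewrite h.
Qed.

Lemma adj_blk m (A : 'M[C]_m) : A^t* = A -> (block_mx A 0 0 A)^t* = block_mx A 0 0 A.
Proof. by move=> h; rewrite tr_block_mx map_block_mx !trmx0 !map_mx0 h. Qed.

Lemma comm_blk m (A : 'M[C]_m) (a b c d k : C) :
  (k *: block_mx a%:M b%:M c%:M d%:M) *m block_mx A 0 0 A =
  block_mx A 0 0 A *m (k *: block_mx a%:M b%:M c%:M d%:M).
Proof.
rewrite -scalemxAl -scalemxAr !mulmx_block !mulmx0 !mul0mx !addr0 !add0r.
by rewrite !mul_scalar_mx !mul_mx_scalar.
Qed.

Lemma conji : ('i%C : C)^* = - 'i%C.
Proof. by rewrite complexiE conjCi. Qed.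

Lemma Rmx_adj m (nu omega : R) : (Rmx m nu omega)^t* = - Rmx m nu omega.
Proof.
rewrite /Rmx adjZ tr_block_mx map_block_mx !tr_scalar_mx !map_scalar_mx /=.
rewrite -scalerN opp_block_mx -!raddfN /=.
by rewrite !rmorphN !rmorphM /= !conjR conji !opprK !raddfN /= !mulNr opprK.
Qed.

Lemma Rmx_sq m (nu omega : R) : 0 < nu -> Rmx m nu omega *m Rmx m nu omega = - 1%:M.
Proof.
move=> nu0.
have th0 : 0 < theta nu omega by rewrite /theta; nra.
set I : C := 'i%C; set W : C := (omega * nu)%:C%C; set S : C := (Num.sqrt nu)%:C%C.
set k : C := ((Num.sqrt (nu * theta nu omega))^-1)%:C%C.
have hI : I * I = -1 by rewrite /I -expr2 sqr_i.
have key : k * k * (W * W + S * S) = 1.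
  rewrite /k /W /S -!rmorphM -rmorphD -rmorphM -(rmorph1 (real_complex R)); congr (_ %:C%C).
  have s1 : Num.sqrt nu * Num.sqrt nu = nu by rewrite -expr2 sqr_sqrtr // ltW.
  have s2 : Num.sqrt (nu * theta nu omega) ^+ 2 = nu * theta nu omega by rewrite sqr_sqrtr // ltW // mulr_gt0.
  have s3 : Num.sqrt (nu * theta nu omega) != 0 by rewrite gt_eqF // sqrtr_gt0 mulr_gt0.
  rewrite s1 -expr2 exprVn s2 /theta.
  field; rewrite /theta in th0; by rewrite !gt_eqF.
rewrite /Rmx -scalemxAl -scalemxAr scalerA mulmx_block.
rewrite -!scalar_mxM -!raddfD /=.
rewrite -raddfN /= (scalar_mx_block m m) scale_block_mx !scale_scalar_mx.
rewrite !rmorphN /= -/I -/W -/S -/k.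
rewrite opp_block_mx !oppr0 /I.
congr (block_mx _ _ _ _); apply/matrixP => i j; rewrite !mxE.
- rewrite -mulNrn; congr (_ *+ _); rewrite -key.
  have -> : - ('i%C * W) * - ('i%C * W) = ('i%C * 'i%C) * (W * W) by ring.
  rewrite /I in hI; rewrite hI; ring.
- have -> : - ('i%C * W) * S + S * ('i%C * W) = 0 by ring.
  by rewrite mulr0 mul0rn.
- have -> : - S * - ('i%C * W) + 'i%C * W * - S = 0 by ring.
  by rewrite mulr0 mul0rn.
- rewrite -mulNrn; congr (_ *+ _); rewrite -key.
  have -> : ('i%C * W) * ('i%C * W) = ('i%C * 'i%C) * (W * W) by ring.
  rewrite /I in hI; rewrite hI; ring.
Qed.

Lemma unit_C m (G : 'M[C]_m) (a f : R) : 0 < a -> G^t* = G ->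
  psdq G 0 (2 * a * f) (f ^+ 2) -> ((a%:C%C)%:M + f%:C%C *: G) \in unitmx.
Proof.
move=> a0 hG hp.
rewrite -row_free_unit -kermx_eq0; apply/rowV0P => v /sub_kermxP hv.
have e : nrm (v *m ((a%:C%C)%:M + f%:C%C *: G)) = 0 by rewrite hv /nrm mul0mx mxE.
move: e; rewrite /nrm nrmM adjD adjS adjZ hG.
rewrite mulmxDl !mulmxDr !mul_scalar_mx !mul_mx_scalar scale_scalar_mx.
rewrite -!scalemxAl -!scalemxAr !scalerA !(qfD, qfZ, qfS).
have := hp v; rewrite !(qfD, qfZ, qfS) => h.
move=> e; apply/eqP; apply: contraT => vn0.
have hv0 : 0 < nrm v by exact: (nrmg_gt0 vn0).
have : 0 < (a%:C%C * a%:C%C) * nrm v by rewrite mulr_gt0 // -rmorphM ltcR mulr_gt0.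
suff -> : a%:C%C * a%:C%C * nrm v = - ((0%:C%C) * nrm v + (2 * a * f)%:C%C * qf v G + (f ^+ 2)%:C%C * qf v (G *m G)).
  by rewrite oppr_gt0 => /(le_lt_trans h); rewrite ltxx.
apply/eqP; rewrite -subr_eq0 opprK -e rmorph0 !rmorphM ?rmorphXn ?rmorph_nat /=.
by apply/eqP; ring.
Qed.

Lemma rho_bound m (M K : 'M[R]_m) (nu omega alpha c1 c2 : R) :
  M^T = M -> K^T = K -> 0 < nu -> 0 < alpha -> 0 <= c1 -> 0 <= c2 ->
  psdq (cmx M) ((c1 - 1) * alpha ^+ 2) (2 * c1 * alpha * theta nu omega) ((c1 - 1) * theta nu omega ^+ 2) ->
  psdq (cmx K) ((c2 - 1) * alpha ^+ 2) (2 * c2 * alpha * Num.sqrt (nu * theta nu omega))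
       ((c2 - 1) * Num.sqrt (nu * theta nu omega) ^+ 2) ->
  psdq (cmx M) 0 (2 * alpha * theta nu omega) (theta nu omega ^+ 2) ->
  psdq (cmx K) 0 (2 * alpha * Num.sqrt (nu * theta nu omega)) (Num.sqrt (nu * theta nu omega) ^+ 2) ->
  forall z, eigenvalue (P_MBAS M K nu omega alpha) z -> z * z^* <= (c1 * c2)%:C%C.
Proof.
move=> hM hK nu0 a0 c10 c20 pM pK uM uK z.
rewrite /P_MBAS.
set th := theta nu omega; set s := Num.sqrt (nu * th).
have -> : (alpha%:C%C)%:M - s%:C%C *: (Rmx m nu omega *m H2 K)
   = (alpha%:C%C)%:M + (- s)%:C%C *: (Rmx m nu omega *m H2 K) by rewrite rmorphN scaleNr.
have hH1 : (H1 M)^t* = H1 M by rewrite /H1 adj_blk // adj_cmx.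
have hH2 : (H2 K)^t* = H2 K by rewrite /H2 adj_blk // adj_cmx.
have cQ1 : Rmx m nu omega *m H1 M = H1 M *m Rmx m nu omega by rewrite /Rmx /H1 comm_blk.
have cQ2 : Rmx m nu omega *m H2 K = H2 K *m Rmx m nu omega by rewrite /Rmx /H2 comm_blk.
set I2 : 'M[C]_(m + m) := (alpha%:C%C)%:M.
set A := I2 + s%:C%C *: H2 K.
set B := I2 + th%:C%C *: (Rmx m nu omega *m H1 M).
set Cm := I2 + th%:C%C *: H1 M.
set D := I2 + (- s)%:C%C *: (Rmx m nu omega *m H2 K).
have uA : A \in unitmx.
  apply: unit_C; [exact: a0 | exact: hH2 | rewrite /H2; apply: psd_block; exact: uK].
have uC : Cm \in unitmx.
  apply: unit_C; [exact: a0 | exact: hH1 | rewrite /H1; apply: psd_block; exact: uM].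
have cBC : B *m Cm = Cm *m B by exact: comm_BC.
have cDA : D *m A = A *m D by exact: comm_BC.
have c1p : 0 <= c1%:C%C :> C by rewrite ler0c.
have c2p : 0 <= c2%:C%C :> C by rewrite ler0c.
have h1 : forall x, nrmg (x *m B) <= c1%:C%C * nrmg (x *m Cm).
  move=> x; apply: normB; [exact: hH1 | exact: Rmx_adj | exact: Rmx_sq | exact: cQ1 | by [] | rewrite /H1; apply: psd_block; exact: pM].
have h2 : forall x, nrmg (x *m D) <= c2%:C%C * nrmg (x *m A).
  move=> x; apply: normB; [exact: hH2 | exact: Rmx_adj | exact: Rmx_sq | exact: cQ2 | exact: sqrrN | rewrite /H2; apply: psd_block; exact: pK].
move=> hz; rewrite rmorphM.
exact: (eig_main uA uC cBC cDA c1p c2p h1 h2 hz).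
Qed.
End T5.

Lemma spec_pos (R : realType) m (M : 'M[R]_m) r : sym_posdef M -> spectrum M r -> 0 < r.
Proof.
move=> [_ hp] /eigenvalueP [v hv vn0].
have h := hp v vn0; rewrite hv -scalemxAl mxE in h.
have vv : 0 <= (v *m v^T) 0 0.
  by rewrite mxE; apply: sumr_ge0 => j _; rewrite mxE -expr2 sqr_ge0.
rewrite lt_neqAle; apply/andP; split.
  by apply/eqP => r0; rewrite -r0 mul0r ltxx in h.
rewrite leNgt; apply/negP => rn; have := mulr_le0_ge0 (ltW rn) vv; by rewrite leNgt h.
Qed.

Lemma spec_m (F : fieldType) m (M : 'M[F]_m) r : spectrum M r -> (0 < m)%N.
Proof.
move=> /eigenvalueP [v _]; case: m M v => // M v.
by rewrite (thinmx0 v) eqxx.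
Qed.

Lemma normc_ge0 (R : realType) (z : R[i]) : 0 <= ComplexField.Normc.normc z.
Proof. by case: z => a b; rewrite /= sqrtr_ge0. Qed.

Lemma normc_abs (R : realType) (z : R[i]) : `|z| = (ComplexField.Normc.normc z)%:C%C.
Proof. by rewrite normc_def; case: z. Qed.

Unset Implicit Arguments.
Theorem mainTheorem4 (R : realType) (m : nat) (M K : 'M[R]_m) (nu omega : R)
  (lmin lmax mumin mumax : R) :
  sym_posdef M -> sym_posdef K -> 0 < nu -> 0 < omega ->
  spectrum M lmin -> spectrum M lmax ->
  (forall l, spectrum M l -> lmin <= l <= lmax) ->
  spectrum K mumin -> spectrum K mumax ->
  (forall mu, spectrum K mu -> mumin <= mu <= mumax) ->
  let th := theta nu omega in
  let alpha1 := th * Num.sqrt (lmin * lmax) in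
  let alpha2 := Num.sqrt (nu * th * mumin * mumax) in
  (0 < alpha1 /\ forall alpha, 0 < alpha -> chi M th alpha1 <= chi M th alpha) /\
  (0 < alpha2 /\ forall alpha, 0 < alpha -> vartheta K nu th alpha2 <= vartheta K nu th alpha) /\
  (forall alpha, 0 < alpha ->
     spectral_radius (P_MBAS M K nu omega alpha) <= chi M th alpha /\
     spectral_radius (P_MBAS M K nu omega alpha) <= vartheta K nu th alpha).
Proof.
move=> hMp hKp nu0 om0 Sl1 Sl2 hl Sm1 Sm2 hm; cbv zeta.
set th := theta nu omega.
have th0 : 0 < th by rewrite /th /theta; nra.
set s := Num.sqrt (nu * th).
have s0 : 0 < s by rewrite sqrtr_gt0 mulr_gt0.
have s2 : s ^+ 2 = nu * th by rewrite sqr_sqrtr // ltW // mulr_gt0.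
have lmin0 : 0 < lmin := spec_pos hMp Sl1.
have mumin0 : 0 < mumin := spec_pos hKp Sm1.
have hl12 : lmin <= lmax by case/andP: (hl _ Sl2).
have hm12 : mumin <= mumax by case/andP: (hm _ Sm2).
have hMs : M^T = M by case: hMp.
have hKs : K^T = K by case: hKp.
have thl0 : 0 < th * lmin by rewrite mulr_gt0.
have sm0 : 0 < s * mumin by rewrite mulr_gt0.
have thl12 : th * lmin <= th * lmax by rewrite ler_pM2l.
have sm12 : s * mumin <= s * mumax by rewrite ler_pM2l.
have chiE : forall a, 0 < a -> chi M th a = Num.max (Ff a (th * lmin)) (Ff a (th * lmax)).
  move=> a a0; rewrite /chi.
  rewrite (@eq_imagel _ _ _ _ (fun l => Ff a (th * l))); last by move=> l _; rewrite /Ff exprMn.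
  exact: (sup_imgF th0 lmin0 Sl1 Sl2 hl a0).
have vtE : forall a, 0 < a -> vartheta K nu th a = Num.max (Ff a (s * mumin)) (Ff a (s * mumax)).
  move=> a a0; rewrite /vartheta.
  rewrite (@eq_imagel _ _ _ _ (fun l => Ff a (s * l))); last by move=> l _; rewrite /Ff exprMn s2.
  exact: (sup_imgF s0 mumin0 Sm1 Sm2 hm a0).
have ea1 : th * Num.sqrt (lmin * lmax) = Num.sqrt ((th * lmin) * (th * lmax)).
  rewrite (_ : (th * lmin) * (th * lmax) = th ^+ 2 * (lmin * lmax)); last by ring.
  by rewrite [RHS]sqrtrM ?sqr_ge0 // sqrtr_sqr gtr0_norm.
have ea2 : Num.sqrt (nu * th * mumin * mumax) = Num.sqrt ((s * mumin) * (s * mumax)).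
  by congr Num.sqrt; rewrite -s2; ring.
have a10 : 0 < th * Num.sqrt (lmin * lmax).
  by rewrite ea1 sqrtr_gt0 mulr_gt0 // (lt_le_trans thl0 thl12).
have a20 : 0 < Num.sqrt (nu * th * mumin * mumax).
  by rewrite ea2 sqrtr_gt0 mulr_gt0 // (lt_le_trans sm0 sm12).
split; [split => // a a0 | split; [split => // a a0 | move=> a a0]].
- by rewrite (chiE _ a10) (chiE _ a0) ea1; apply: optF.
- by rewrite (vtE _ a20) (vtE _ a0) ea2; apply: optF.
set ch := chi M th a; set vt := vartheta K nu th a.
have ce : ch = _ := chiE a a0.
have ve : vt = _ := vtE a a0.
have ch0 : 0 <= ch by rewrite ce le_max Ff_ge0.
have ch1 : ch <= 1 by rewrite ce ge_max !Ff_le1 // (lt_le_trans thl0 thl12).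
have vt0 : 0 <= vt by rewrite ve le_max Ff_ge0.
have vt1 : vt <= 1 by rewrite ve ge_max !Ff_le1 // (lt_le_trans sm0 sm12).
have pM : psdq (cmx M) ((ch ^+ 2 - 1) * a ^+ 2) (2 * ch ^+ 2 * a * th) ((ch ^+ 2 - 1) * th ^+ 2).
  apply: psd_cmx => // r Sr.
  have r0 := spec_pos hMp Sr.
  have tr0 : 0 < th * r by rewrite mulr_gt0.
  have hF : Ff a (th * r) <= ch.
    rewrite ce; apply: Ff_qc => //; case/andP: (hl _ Sr) => h1 h2.
    by rewrite !ler_pM2l // h1 h2.
  have hF2 : Ff a (th * r) ^+ 2 <= ch ^+ 2 by rewrite ler_sqr ?nnegrE // Ff_ge0.
  rewrite (_ : _ + _ + _ = (ch ^+ 2 - 1) * a ^+ 2 + 2 * ch ^+ 2 * a * (th * r) + (ch ^+ 2 - 1) * (th * r) ^+ 2); last by ring.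
  exact: Ff_quad.
have pK : psdq (cmx K) ((vt ^+ 2 - 1) * a ^+ 2) (2 * vt ^+ 2 * a * s) ((vt ^+ 2 - 1) * s ^+ 2).
  apply: psd_cmx => // r Sr.
  have r0 := spec_pos hKp Sr.
  have tr0 : 0 < s * r by rewrite mulr_gt0.
  have hF : Ff a (s * r) <= vt.
    rewrite ve; apply: Ff_qc => //; case/andP: (hm _ Sr) => h1 h2.
    by rewrite !ler_pM2l // h1 h2.
  have hF2 : Ff a (s * r) ^+ 2 <= vt ^+ 2 by rewrite ler_sqr ?nnegrE // Ff_ge0.
  rewrite (_ : _ + _ + _ = (vt ^+ 2 - 1) * a ^+ 2 + 2 * vt ^+ 2 * a * (s * r) + (vt ^+ 2 - 1) * (s * r) ^+ 2); last by ring.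
  exact: Ff_quad.
have uM : psdq (cmx M) 0 (2 * a * th) (th ^+ 2).
  apply: psd_cmx => // r Sr; have r0 := spec_pos hMp Sr.
  by rewrite add0r addr_ge0 // mulr_ge0 ?sqr_ge0 // ltW // !mulr_gt0.
have uK : psdq (cmx K) 0 (2 * a * s) (s ^+ 2).
  apply: psd_cmx => // r Sr; have r0 := spec_pos hKp Sr.
  by rewrite add0r addr_ge0 // mulr_ge0 ?sqr_ge0 // ltW // !mulr_gt0.
have hz : forall z, spectrum (P_MBAS M K nu omega a) z -> ComplexField.Normc.normc z <= ch * vt.
  move=> z ez.
  have := rho_bound hMs hKs nu0 a0 (sqr_ge0 ch) (sqr_ge0 vt) pM pK uM uK ez.
  rewrite -normCK normc_abs -rmorphXn lecR -exprMn => h.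
  by rewrite -ler_sqr ?nnegrE ?normc_ge0 ?mulr_ge0.
have ne : [set ComplexField.Normc.normc z | z in spectrum (P_MBAS M K nu omega a)] !=set0.
  have mp : (0 < m + m)%N by rewrite addn_gt0 (spec_m Sl1).
  have [z0 ez0] := eigenvalue_closed (P_MBAS M K nu omega a) mp.
  by exists (ComplexField.Normc.normc z0); exists z0.
rewrite /spectral_radius; split; apply: ge_sup => // _ [z ez <-]; apply: le_trans (hz z ez) _.
  by rewrite ler_piMr.
by rewrite ler_piMl.
Qed.
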